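(* For any $\varepsilon\in(0,1]$ and $D\in\mathbb{N}$ there exists a constant $c>0$ such that $|[M]_\varepsilon|\le c|M|$ for every $n\in\mathbb{N}$ and every $M\subseteq[n]^D$.
   Context: $\mathcal{L}$ is the set of all axis-parallel lines in $[n]^D$, i.e. sets $A_1\times\cdots\times A_D$ with $A_i=[n]$ for one $i$ and $|A_j|=1$ for all $j\ne i$. The $\varepsilon$-closure $[M]_\varepsilon$ of $M\subseteq[n]^D$ is the minimum set containing $M$ such that for every line $\ell\in\mathcal{L}$ either $\ell\subseteq[M]_\varepsilon$ or $|\ell\cap[M]_\varepsilon|<\varepsilon n$. *)

(* Defs.v *)
From HB Require Import structures.
From mathcomp Require Import all_boot all_order all_algebra.
From mathcomp Require Import boolp reals.
Set Implicit Arguments. Unset Strict Implicit. Unset Printing Implicit Defensive.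
Import Order.TTheory GRing.Theory Num.Theory.
Local Open Scope ring_scope.

(* Points of [n]^D are functions 'I_D -> 'I_n (coordinates 0..n-1). *)
Definition grid (D n : nat) := {ffun 'I_D -> 'I_n}.

(* The axis-parallel line through x in direction i:
   all y agreeing with x on every coordinate j <> i.
   Every axis-parallel line is of this form (for some i and x). *)
Definition axis_line (D n : nat) (i : 'I_D) (x : grid D n) : {set grid D n} :=
  [set y : grid D n | [forall j : 'I_D, (j != i) ==> (y j == x j)]].

Definition eps_closed (R : realType) (eps : R) (D n : nat) (S : {set grid D n}) : Prop :=
  forall (i : 'I_D) (x : grid D n),
    axis_line i x \subset S \/ (#|axis_line i x :&: S|%:R < eps * n%:R).

Definition eps_closure (R : realType) (eps : R) (D n : nat) (M : {set grid D n})
  : {set grid D n} :=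
  [set x : grid D n | `[< forall S : {set grid D n},
                           M \subset S -> eps_closed eps S -> x \in S >]].

(* Main.v *)
Require Import Defs.
From HB Require Import structures.
From mathcomp Require Import all_boot all_order all_algebra.
From mathcomp Require Import boolp reals.
From mathcomp Require Import ring lra.
Import Order.TTheory GRing.Theory Num.Theory.
Set Implicit Arguments. Unset Strict Implicit.

Section Comb.
Variables (D n : nat).
Implicit Types (x y z : grid D n) (J : {set 'I_D}) (A : {set grid D n}).

Definition upd x (i : 'I_D) (t : 'I_n) : grid D n :=
  [ffun j => if j == i then t else x j].

Definition subc J x : {set grid D n} :=
  [set y : grid D n | [forall j, (j \notin J) ==> (y j == x j)]].

Lemma in_subc J x y : (y \in subc J x) = [forall j, (j \notin J) ==> (y j == x j)].
Proof. by rewrite inE. Qed.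

Lemma subc_sym J x y : (y \in subc J x) = (x \in subc J y).
Proof.
rewrite !in_subc; apply/forallP/forallP => H j; have := H j;
  by rewrite eq_sym.
Qed.

Lemma card_ind A : #|A| = \sum_y (y \in A : nat).
Proof. by rewrite -sum1_card big_mkcond /=; apply: eq_bigr => y _; case: (y \in A). Qed.

Lemma card_part A J x i : i \notin J ->
  #|A :&: subc (i |: J) x| = \sum_(t < n) #|A :&: subc J (upd x i t)|.
Proof.
move=> iJ; rewrite card_ind.
under [RHS]eq_bigr => t _ do rewrite card_ind.
rewrite exchange_big /=; apply: eq_bigr => y _.
rewrite (bigD1 (y i)) //= big1 ?addn0.
  apply: congr1; rewrite !inE; congr (_ && _).
  apply/forallP/forallP => H j.
    have := H j; rewrite ffunE in_setU1 negb_or; case: eqP => [-> | _] //=.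
    by rewrite eqxx implybT.
  have := H j; rewrite ffunE in_setU1 negb_or.
  by case: (j =P i) => [->|_]; rewrite ?eqxx.
move=> t ht; rewrite inE.
suff -> : (y \in subc J (upd x i t)) = false by rewrite andbF.
apply/negbTE; apply/negP; rewrite in_subc => /forallP /(_ i).
by rewrite iJ /= ffunE eqxx eq_sym (negbTE ht).
Qed.

Lemma subc0 x : subc set0 x = [set x].
Proof.
apply/setP => y; rewrite in_subc inE; apply/forallP/eqP => [H|->].
  by apply/ffunP => j; have := H j; rewrite in_set0 /= => /eqP.
by move=> j; rewrite eqxx implybT.
Qed.

Lemma card_subc J x : #|subc J x| = n ^ #|J|.
Proof.
move: {2}#|J| (erefl #|J|) => k; elim: k J x => [|k IH] J x hk.
  move/eqP: hk; rewrite cards_eq0 => /eqP ->; by rewrite subc0 cards1 cards0.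
have : (0 < #|J|)%N by rewrite hk.
rewrite card_gt0 => /set0Pn [i iJ].
have HJ : J = i |: (J :\ i) by rewrite setD1K.
have iJ' : i \notin J :\ i by rewrite !inE eqxx.
have hk' : #|J :\ i| = k by move: hk; rewrite (cardsD1 i J) iJ add1n => -[].
rewrite hk HJ -[subc _ _]setTI card_part //.
under eq_bigr => t _ do rewrite setTI (IH _ _ hk').
by rewrite sum_nat_const card_ord hk' expnS.
Qed.

Lemma sum_subc A J : \sum_x #|A :&: subc J x| = #|A| * n ^ #|J|.
Proof.
under eq_bigr => x _ do rewrite card_ind.
rewrite exchange_big /= card_ind big_distrl /=; apply: eq_bigr => y _.
under eq_bigr => x _ do rewrite inE subc_sym.
case: (y \in A) => /=; last by rewrite mul0n big1.
by rewrite mul1n -(card_subc J y) card_ind.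
Qed.

Lemma axis_subc i x : axis_line i x = subc [set i] x.
Proof.
apply/setP => y; rewrite !inE; apply/forallP/forallP => H j; have := H j;
  by rewrite !inE.
Qed.

Lemma card_line A i x :
  #|A :&: axis_line i x| = #|[set t : 'I_n | upd x i t \in A]|.
Proof.
rewrite axis_subc -(setU0 [set i]) card_part ?in_set0 //.
rewrite -[in RHS]sum1_card [in RHS]big_mkcond /=; apply: eq_bigr => t _; rewrite subc0 inE.
have -> : A :&: [set upd x i t] = if upd x i t \in A then [set upd x i t] else set0.
  apply/setP => z; rewrite !inE; case hu: (upd x i t \in A); rewrite ?inE ?andbF ?andbT //.
    by case: eqP => [->|]; rewrite ?hu ?andbF.
  by case: eqP => [->|]; rewrite ?hu ?andbF.
by case: (upd x i t \in A); rewrite ?cards1 ?cards0.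
Qed.

Lemma subc_line J i x y : i \in J -> y \in axis_line i x -> subc J y = subc J x.
Proof.
move=> iJ /[!inE] /forallP H; apply/setP => z; rewrite !in_subc.
apply/forallP/forallP => H2 j; apply/implyP => hj.
  have hji : j != i by apply: contraNneq hj => ->.
  by rewrite (eqP (implyP (H2 j) hj)) (implyP (H j) hji).
have hji : j != i by apply: contraNneq hj => ->.
by rewrite (eqP (implyP (H2 j) hj)) eq_sym (implyP (H j) hji).
Qed.

Lemma upd_line i x t : upd x i t \in axis_line i x.
Proof. rewrite inE; apply/forallP => j; rewrite ffunE; by case: ifP => [/eqP ->|_]; rewrite ?eqxx ?implybT. Qed.

End Comb.

Lemma card_indT (T : finType) (A : {set T}) : #|A| = \sum_y (y \in A : nat).
Proof. by rewrite -sum1_card big_mkcond /=; apply: eq_bigr => y _; case: (y \in A). Qed.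

Lemma cover_card (T I : finType) (P : pred T) (Q : I -> pred T) :
  (forall t, P t -> exists j, Q j t) ->
  #|[set t | P t]| <= \sum_j #|[set t | Q j t]|.
Proof.
move=> H; rewrite card_indT.
under [X in _ <= X]eq_bigr => j _ do rewrite card_indT.
rewrite exchange_big /=; apply: leq_sum => t _; rewrite inE.
case Pt: (P t) => //; have [j Qj] := H t Pt.
by rewrite (bigD1 j) //= inE Qj leq_addr.
Qed.

Local Open Scope ring_scope.

Section Main.
Variables (R : realType) (eps : R) (D n : nat) (M : {set grid D n}).
Hypotheses (eps_gt0 : 0 < eps) (eps_le1 : eps <= 1).

Let N := #|{set 'I_D}|.
Let a : R := eps / N%:R / 2.

Lemma N_gt0 : (0 < N)%N.
Proof. by apply/card_gt0P; exists set0. Qed.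

Lemma a_gt0 : 0 < a.
Proof. by rewrite /a !divr_gt0 // ltr0n N_gt0. Qed.

Lemma a_le1 : a <= 1.
Proof.
rewrite /a ler_pdivrMr // ler_pdivrMr ?ltr0n ?N_gt0 //.
apply: (le_trans eps_le1); rewrite mul1r -natrM ler1n muln_gt0 N_gt0 //.
Qed.

Definition dense (J : {set 'I_D}) (x : grid D n) : bool :=
  a ^+ #|J| * (n ^ #|J|)%N%:R <= #|M :&: subc J x|%:R.

Definition Sset : {set grid D n} := [set x | [exists J, dense J x]].

Lemma M_sub_S : M \subset Sset.
Proof.
apply/subsetP => x xM; rewrite inE; apply/existsP; exists set0.
rewrite /dense cards0 expr0 expn0 mul1r subc0.
have -> : M :&: [set x] = [set x].
  by apply/setP => z; rewrite !inE; case: eqP => [->|]; rewrite ?xM ?andbF.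
by rewrite cards1.
Qed.

Lemma dense_count J : #|[set x | dense J x]|%:R * a ^+ D <= #|M|%:R.
Proof.
case: (posnP (n ^ #|J|)) => [nk0|nkpos].
  move/eqP: nk0; rewrite expn_eq0 => /andP [/eqP n0 /card_gt0P [j jJ]].
  suff -> : #|[set x | dense J x]| = 0%N by rewrite mul0r ler0n.
  apply/eqP; rewrite cards_eq0; apply/eqP/setP => x; rewrite !inE.
  by move: (x j); rewrite n0 => -[].
have key : #|[set x | dense J x]|%:R * (a ^+ #|J| * (n ^ #|J|)%N%:R)
           <= #|M|%:R * (n ^ #|J|)%N%:R.
  have -> : #|[set x | dense J x]|%:R * (a ^+ #|J| * (n ^ #|J|)%N%:R) =
     \sum_(x in [set x | dense J x]) (a ^+ #|J| * (n ^ #|J|)%N%:R) :> R.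
    by rewrite sumr_const mulr_natl.
  apply: (le_trans (y := \sum_(x in [set x | dense J x]) (#|M :&: subc J x|%:R : R))).
    by apply: ler_sum => x; rewrite inE.
  rewrite [X in X <= _]big_mkcond /= -natrM -sum_subc natr_sum.
  by apply: ler_sum => x _; case: ifP => // _; rewrite ler0n.
have key2 : #|[set x | dense J x]|%:R * a ^+ #|J| <= (#|M|%:R : R).
  by rewrite -(ler_pM2r (x := (n ^ #|J|)%N%:R)) ?ltr0n // -mulrA.
apply: le_trans key2; apply: ler_wpM2l; first exact: ler0n.
apply: ler_wiXn2l; [exact: ltW a_gt0 | exact: a_le1 |].
by rewrite -[X in (_ <= X)%N](card_ord D) max_card.
Qed.

Lemma line_bound (i : 'I_D) (x : grid D n) (npos : (0 < n)%N) (J : {set 'I_D}) :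
  (forall J' : {set 'I_D}, i \notin J' -> ~~ dense (i |: J') x) ->
  #|[set t : 'I_n | (i \notin J) && dense J (upd x i t)]|%:R <= a * n%:R.
Proof.
move=> hnd; case: (boolP (i \in J)) => iJ /=.
  apply: (le_trans (y := 0%:R)); last by rewrite mulr_ge0 ?ler0n // ltW // a_gt0.
  by rewrite ler_nat leqn0 cards_eq0; apply/eqP/setP => t; rewrite !inE.
have nd := hnd J iJ.
have nkpos : (0 < n ^ #|J|)%N by rewrite expn_gt0 npos.
move: nd; rewrite /dense cardsU1 iJ add1n -ltNge (card_part M x iJ) => h.
have key : #|[set t : 'I_n | dense J (upd x i t)]|%:R * (a ^+ #|J| * (n ^ #|J|)%N%:R)
           <= \sum_(t < n) (#|M :&: subc J (upd x i t)|%:R : R).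
  have -> : #|[set t : 'I_n | dense J (upd x i t)]|%:R * (a ^+ #|J| * (n ^ #|J|)%N%:R) =
     \sum_(t in [set t : 'I_n | dense J (upd x i t)]) (a ^+ #|J| * (n ^ #|J|)%N%:R) :> R.
    by rewrite sumr_const mulr_natl.
  apply: (le_trans (y := \sum_(t in [set t : 'I_n | dense J (upd x i t)])
                            (#|M :&: subc J (upd x i t)|%:R : R))).
    by apply: ler_sum => t; rewrite inE.
  rewrite [X in X <= _]big_mkcond /=.
  by apply: ler_sum => t _; case: ifP => // _; rewrite ler0n.
rewrite -natr_sum in key.
have e : a ^+ #|J|.+1 * (n ^ #|J|.+1)%N%:R = (a * n%:R) * (a ^+ #|J| * (n ^ #|J|)%N%:R).
  by rewrite exprS expnS natrM; ring.
have h2 := le_lt_trans key h.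
rewrite e in h2.
have pos : 0 < a ^+ #|J| * (n ^ #|J|)%N%:R by rewrite mulr_gt0 ?exprn_gt0 ?a_gt0 ?ltr0n.
by apply: ltW; rewrite -(ltr_pM2r pos).
Qed.

Lemma self_line (i : 'I_D) (x : grid D n) : x \in axis_line i x.
Proof. by rewrite inE; apply/forallP => j; rewrite eqxx implybT. Qed.

Lemma S_closed : eps_closed eps Sset.
Proof.
move=> i x.
case: (posnP n) => [n0|npos].
  left; apply/subsetP => y _; by case: (y i) => m hm; exfalso; rewrite n0 in hm.
case: (boolP [exists y : grid D n, exists J : {set 'I_D}, [&& y \in axis_line i x, i \in J & dense J y]]).
  move=> /existsP [y /existsP [J /and3P [yl iJ dy]]]; left.
  apply/subsetP => z zl; rewrite inE; apply/existsP; exists J.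
  by rewrite /dense (subc_line iJ zl) -(subc_line iJ yl).
move=> hneg; right.
have hnd : forall J' : {set 'I_D}, i \notin J' -> ~~ dense (i |: J') x.
  move=> J' _; apply/negP => d; move/negP: hneg; apply; apply/existsP; exists x.
  by apply/existsP; exists (i |: J'); rewrite self_line setU11 d.
rewrite setIC card_line.
have cov := @cover_card _ _ (fun t : 'I_n => upd x i t \in Sset)
   (fun (J : {set 'I_D}) t => (i \notin J) && dense J (upd x i t)).
have : (#|[set t : 'I_n | upd x i t \in Sset]| <=
       \sum_(J : {set 'I_D}) #|[set t : 'I_n | (i \notin J) && dense J (upd x i t)]|)%N.
  apply: cov => t; rewrite inE => /existsP [J dJ]; exists J; rewrite dJ andbT.
  apply/negP => iJ; move/negP: hneg; apply; apply/existsP; exists (upd x i t).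
  by apply/existsP; exists J; rewrite upd_line iJ dJ.
rewrite -(ler_nat R) natr_sum => h.
apply: (le_lt_trans h); apply: (le_lt_trans (y := \sum_(J : {set 'I_D}) (a * n%:R))).
  by apply: ler_sum => J _; apply: line_bound.
have -> : \sum_(J : {set 'I_D}) (a * n%:R) = eps / 2 * n%:R.
  rewrite sumr_const (_ : #|_| = N) //.
  rewrite (_ : (a * n%:R) *+ N = (a * n%:R) * N%:R); last exact: esym (mulr_natr _ _).
  have hN : N%:R != 0 :> R by rewrite pnatr_eq0 -lt0n N_gt0.
  rewrite /a; field; exact: hN.
rewrite ltr_pM2r ?ltr0n // ltr_pdivrMr // ltr_pMr // ltr1n //.
Qed.

Lemma S_bound : #|Sset|%:R <= N%:R / a ^+ D * #|M|%:R.
Proof.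
have cov := @cover_card _ _ (fun x : grid D n => [exists J, dense J x]) dense.
have h : (#|Sset| <= \sum_(J : {set 'I_D}) #|[set x | dense J x]|)%N.
  by apply: cov => x /existsP.
rewrite mulrAC ler_pdivlMr ?exprn_gt0 ?a_gt0 //.
rewrite -(ler_nat R) natr_sum in h.
apply: (le_trans (ler_wpM2r (ltW (exprn_gt0 D a_gt0)) h)).
rewrite mulr_suml; apply: (le_trans (y := \sum_(J : {set 'I_D}) (#|M|%:R : R))).
  by apply: ler_sum => J _; apply: dense_count.
by rewrite sumr_const mulrC mulr_natr.
Qed.

Lemma closure_bound : #|eps_closure eps M|%:R <= N%:R / a ^+ D * #|M|%:R.
Proof.
apply: le_trans S_bound; rewrite ler_nat; apply: subset_leq_card.
apply/subsetP => x; rewrite inE => /asboolP; apply; [exact: M_sub_S | exact: S_closed].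
Qed.

End Main.

Unset Implicit Arguments.
Theorem lemma8 (R : realType) (eps : R) (D : nat) :
  0 < eps -> eps <= 1 ->
  exists c : R, 0 < c /\
    forall (n : nat) (M : {set grid D n}),
      #|eps_closure eps M|%:R <= c * #|M|%:R.
Proof.
move=> e0 e1.
exists (#|{set 'I_D}|%:R / (eps / #|{set 'I_D}|%:R / 2) ^+ D); split.
  by rewrite divr_gt0 ?exprn_gt0 ?ltr0n ?N_gt0 // (@a_gt0 R eps D e0).
by move=> n M; apply: (@closure_bound R eps D n M e0 e1).
Qed.
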